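(* Let $f_1,\dots,f_k \in \mathbb{K}[\bm{x}]$ be multihomogeneous polynomials, let $\bm{d} \in \mathbb{Z}^r$ and let $<$ be a monomial order. If $[H_1^s]_{\bm{d}} = 0$ for all $s \leq k$, then the Macaulay matrix $\mathcal{M}^k_{\bm{d}}$ (the output of the algorithm $\texttt{M}_3\texttt{H}(\{f_1,\dots,f_k\},\bm{d},<)$ described below) is full-rank.
   Context: $\mathbb{K}$ is a field of characteristic 0. For $n_1,\dots,n_r \in \mathbb{N}$, $\mathbb{K}[\bm{x}] := \bigotimes_{i=1}^r \mathbb{K}[x_{i,0},\dots,x_{i,n_i}]$ is the multihomogeneous $\mathbb{K}$-algebra multigraded by $\mathbb{Z}^r$, with $\mathbb{K}[\bm{x}]_{\bm{d}} := \bigotimes_{i=1}^r \mathbb{K}[x_{i,0},\dots,x_{i,n_i}]_{d_i}$; for a module $\mathrm{M}$, $[\mathrm{M}]_{\bm{d}}$ denotes its graded part of multidegree $\bm{d}$. For $s \le k$, $H_1^s := H_1(\mathcal{K}_\bullet(f_1,\dots,f_s;\mathbb{K}[\bm{x}]))$ is the first homology module of the Koszul complex of $f_1,\dots,f_s$ over $\mathbb{K}[\bm{x}]$. A Macaulay matrix is a matrix whose columns are indexed by monomials and whose rows are indexed by polynomials, the entry at (monomial $m$, polynomial $f$) being the coefficient of $m$ in $f$. The matrix $\mathcal{M}^k_{\bm{d}} = \texttt{M}_3\texttt{H}(\{f_1,\dots,f_k\},\bm{d},<)$ is defined recursively: if $k=1$, start with the Macaulay matrix with columns indexed by the monomials of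 $\mathbb{K}[\bm{x}]_{\bm{d}}$ in decreasing order w.r.t. $<$ and no rows, and set $\mathfrak{L}=\emptyset$; if $k>1$, start with $\mathcal{M}^{k-1}_{\bm{d}} = \texttt{M}_3\texttt{H}(\{f_1,\dots,f_{k-1}\},\bm{d},<)$ and let $\mathfrak{L}$ be the set of leading monomials of the rows of the Gaussian elimination of $\texttt{M}_3\texttt{H}(\{f_1,\dots,f_{k-1}\},\bm{d}-\deg(f_k),<)$. Then, for every monomial $\bm{x}^\beta \in \mathbb{K}[\bm{x}]_{\bm{d}-\deg(f_k)}$ with $\bm{x}^\beta \notin \mathfrak{L}$, add the row $\bm{x}^\beta \cdot f_k$. *)

(* Defs.v *)
From HB Require Import structures.
From mathcomp Require Import all_boot all_order all_algebra.
From mathcomp Require Import mpoly.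
From Stdlib Require Import ClassicalEpsilon.
Set Implicit Arguments. Unset Strict Implicit. Unset Printing Implicit Defensive.
Import Order.TTheory GRing.Theory Num.Theory.
Local Open Scope ring_scope.

(* Multihomogeneous setting: r blocks of variables, block i has (n i).+1
   variables x_{i,0..n_i}.  All variables are numbered 0 .. N-1 with
   N = \sum_i (n i).+1 (consecutively, block by block), and
   K[x] = {mpoly K[nvars n]}. *)
Definition nvars (r : nat) (n : 'I_r -> nat) : nat := (\sum_(i < r) (n i).+1)%N.

Definition block (r : nat) (n : 'I_r -> nat) (j : 'I_(nvars n)) : 'I_r :=
  @tagnat.sig1 r (fun i => (n i).+1) j.

Definition mmdeg (r : nat) (n : 'I_r -> nat) (m : 'X_{1..nvars n}) (i : 'I_r) : int :=
  ((\sum_(j < nvars n | block j == i) m j)%N)%:Z.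

Definition mhomog (K : fieldType) (r : nat) (n : 'I_r -> nat)
  (e : 'I_r -> int) (p : {mpoly K[nvars n]}) : Prop :=
  forall m, m \in msupp p -> forall i, mmdeg m i = e i.

Definition monomial_order (N : nat) (lt : rel 'X_{1..N}) : Prop :=
  [/\ irreflexive lt, transitive lt,
      (forall a b, a != b -> lt a b || lt b a),
      (forall a b c, lt a b -> lt (a + c)%MM (b + c)%MM) &
      (forall a, a != 0%MM -> lt 0%MM a)].

Definition mons (r : nat) (n : 'I_r -> nat) (lt : rel 'X_{1..nvars n})
  (e : 'I_r -> int) : seq 'X_{1..nvars n} :=
  let b := (\sum_(i < r) `|e i|)%N.+1 in
  sort (fun a c => lt c a || (a == c))
    [seq bmnm m | m <- enum [pred m : bmultinom (nvars n) b | [forall i, @mmdeg r n (bmnm m) i == e i]]].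

Definition is_lm (N : nat) (K : fieldType) (lt : rel 'X_{1..N})
  (p : {mpoly K[N]}) (m : 'X_{1..N}) : Prop :=
  m \in msupp p /\ forall m', m' \in msupp p -> m' != m -> lt m' m.

Definition in_span (N : nat) (K : fieldType) (rows : seq {mpoly K[N]})
  (p : {mpoly K[N]}) : Prop :=
  exists c : 'I_(size rows) -> K, p = \sum_(i < size rows) c i *: rows`_i.

(* The set of leading monomials of the rows of the Gaussian elimination
   (row echelon form) of the Macaulay matrix with rows `rows` and columns in
   decreasing order = the set of leading monomials of the nonzero
   elements of its row space. *)
Definition LMset (N : nat) (K : fieldType) (lt : rel 'X_{1..N})
  (rows : seq {mpoly K[N]}) (m : 'X_{1..N}) : Prop :=
  exists p, [/\ in_span rows p, p != 0 & is_lm lt p m].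

Definition decide (P : Prop) : bool :=
  if excluded_middle_informative P then true else false.

(* Algorithm M3H, on the reversed list of (polynomial, multidegree) pairs:
   returns the list of rows of the Macaulay matrix, in order. *)
Fixpoint M3H_rev (K : fieldType) (r : nat) (n : 'I_r -> nat)
  (lt : rel 'X_{1..nvars n})
  (rfs : seq ({mpoly K[nvars n]} * ('I_r -> nat))) (d : 'I_r -> int)
  : seq {mpoly K[nvars n]} :=
  match rfs with
  | [::] => [::]
  | (fk, ek) :: rfs' =>
      let dk := fun i => d i - (ek i)%:Z in
      M3H_rev lt rfs' d ++
      [seq 'X_[beta] * fk | beta <- mons lt dk
                          & ~~ decide (LMset lt (M3H_rev lt rfs' dk) beta)]
  end.

Definition M3H_rows (K : fieldType) (r : nat) (n : 'I_r -> nat)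
  (lt : rel 'X_{1..nvars n})
  (fs : seq ({mpoly K[nvars n]} * ('I_r -> nat))) (d : 'I_r -> int) :=
  M3H_rev lt (rev fs) d.

Definition macaulay (N : nat) (K : fieldType) (rows : seq {mpoly K[N]})
  (cols : seq 'X_{1..N}) : 'M[K]_(size rows, size cols) :=
  \matrix_(i < size rows, j < size cols) (rows`_i)@_(nth 0%MM cols j).

Definition M3H (K : fieldType) (r : nat) (n : 'I_r -> nat)
  (lt : rel 'X_{1..nvars n})
  (fs : seq ({mpoly K[nvars n]} * ('I_r -> nat))) (d : 'I_r -> int) :=
  macaulay (M3H_rows lt fs d) (mons lt d).

Definition full_rank (K : fieldType) (a b : nat) (A : 'M[K]_(a, b)) : bool :=
  \rank A == minn a b.

(* [H_1(K(f_1..f_s; K[x]))]_d = 0, written out: every degree-d element of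
   the kernel of d_1 : (+)_j K[x](-deg f_j) -> K[x],  (g_j) |-> sum g_j f_j,
   is in the image of d_2 : (+)_{i<j} K[x](-deg f_i-deg f_j) e_i/\e_j,
   e_i/\e_j |-> f_i e_j - f_j e_i (with degree-d preimage). *)
Definition H1_vanishes (K : fieldType) (r : nat) (n : 'I_r -> nat)
  (fs : seq ({mpoly K[nvars n]} * ('I_r -> nat))) (d : 'I_r -> int) : Prop :=
  let s := size fs in
  let f := fun j : 'I_s => (nth (0, fun=> 0%N) fs j).1 in
  let e := fun j : 'I_s => (nth (0, fun=> 0%N) fs j).2 in
  forall g : 'I_s -> {mpoly K[nvars n]},
    (forall j, mhomog (fun i => d i - (e j i)%:Z) (g j)) ->
    \sum_(j < s) g j * f j = 0 ->
    exists h : 'I_s -> 'I_s -> {mpoly K[nvars n]},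
      (forall i j : 'I_s, (i < j)%N ->
         mhomog (fun l => d l - (e i l)%:Z - (e j l)%:Z) (h i j)) /\
      (forall j, g j = \sum_(i < s | (i < j)%N) h i j * f i
                     - \sum_(i < s | (j < i)%N) h j i * f i).

(* Main.v *)
Require Import Defs.
From HB Require Import structures.
From mathcomp Require Import all_boot all_order all_algebra.
From mathcomp Require Import mpoly.
From Stdlib Require Import ClassicalEpsilon.
Set Implicit Arguments. Unset Strict Implicit. Unset Printing Implicit Defensive.
Import Order.TTheory GRing.Theory Num.Theory.
Local Open Scope ring_scope.

Section Pf.
Variable K : fieldType.
Variable r : nat.
Variable n : 'I_r -> nat.
Local Notation N := (nvars n).
Local Notation P := {mpoly K[N]}.
Variable lt : rel 'X_{1..N}.
Hypothesis ltmo : monomial_order lt.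

Lemma mhomog_ext e e' (p : P) : (forall i, e i = e' i) -> mhomog e p -> mhomog e' p.
Proof. by move=> He H m Hm i; rewrite -He H. Qed.

Lemma mhomog0 e : mhomog e (0 : P).
Proof. by move=> m; rewrite msupp0. Qed.

Lemma mhomogD e (p q : P) : mhomog e p -> mhomog e q -> mhomog e (p + q).
Proof. by move=> Hp Hq m /msuppD_le; rewrite mem_cat => /orP[/Hp|/Hq]. Qed.

Lemma mhomogZ e c (p : P) : mhomog e p -> mhomog e (c *: p).
Proof. by move=> Hp m /msuppZ_le /Hp. Qed.

Lemma mhomogN e (p : P) : mhomog e p -> mhomog e (- p).
Proof. by move=> Hp; rewrite -scaleN1r; apply: mhomogZ. Qed.

Lemma mhomogB e (p q : P) : mhomog e p -> mhomog e q -> mhomog e (p - q).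
Proof. by move=> Hp Hq; apply: mhomogD => //; apply: mhomogN. Qed.

Lemma mhomog_sum e (I : Type) (s : seq I) (Q : pred I) (F : I -> P) :
  (forall i, Q i -> mhomog e (F i)) -> mhomog e (\sum_(i <- s | Q i) F i).
Proof.
move=> H; apply: (big_ind (mhomog e)); [exact: mhomog0| exact: mhomogD|exact: H].
Qed.

Lemma mmdegD (m1 m2 : 'X_{1..N}) i : mmdeg (m1 + m2)%MM i = mmdeg m1 i + mmdeg m2 i.
Proof.
rewrite /mmdeg -PoszD; congr Posz.
by rewrite -big_split /=; apply: eq_bigr => j _; rewrite mnmDE.
Qed.

Lemma mhomogM e1 e2 (p q : P) : mhomog e1 p -> mhomog e2 q ->
  mhomog (fun i => e1 i + e2 i) (p * q).
Proof.
move=> Hp Hq m /msuppM_le /allpairsP [[m1 m2] /= [H1 H2 ->]] i.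
by rewrite mmdegD Hp ?Hq.
Qed.

Lemma mhomogX e (m : 'X_{1..N}) : (forall i, mmdeg m i = e i) -> mhomog e ('X_[m] : P).
Proof. by move=> H m'; rewrite msuppX inE => /eqP ->. Qed.

Lemma mons_homog e b : b \in mons lt e -> forall i, mmdeg b i = e i.
Proof.
rewrite /mons mem_sort => /mapP [bm]; rewrite mem_enum inE => /forallP H -> i.
exact/eqP/H.
Qed.

Lemma mons_uniq e : uniq (mons lt e).
Proof.
rewrite /mons sort_uniq map_inj_uniq ?enum_uniq //; exact: val_inj.
Qed.

Lemma mdeg_mmdeg (m : 'X_{1..N}) : (mdeg m)%:Z = \sum_(i < r) mmdeg m i.
Proof.
rewrite mdegE (partition_big (@block r n) xpredT) //= /mmdeg.
by rewrite -(big_morph Posz PoszD (erefl 0%:Z)).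
Qed.

Lemma homog_mons e (p : P) m : mhomog e p -> m \in msupp p -> m \in mons lt e.
Proof.
move=> Hp Hm; have H := Hp m Hm.
have Hdeg : (mdeg m < (\sum_(i < r) `|e i|).+1)%N.
  rewrite ltnS -lez_nat mdeg_mmdeg (big_morph Posz PoszD (erefl 0%:Z)).
  by apply: ler_sum => i _; rewrite -H abszE ler_norm.
rewrite /mons mem_sort; apply/mapP; exists (BMultinom Hdeg) => //.
by rewrite mem_enum inE; apply/forallP => i; rewrite /= H.
Qed.

Lemma ltI : irreflexive lt. Proof. by case: ltmo. Qed.
Lemma ltT : transitive lt. Proof. by case: ltmo. Qed.
Lemma ltTot a b : a != b -> lt a b || lt b a. Proof. by case: ltmo => _ _ H _ _; apply: H. Qed.

Lemma max_exists (s : seq 'X_{1..N}) : s != [::] ->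
  exists2 x, x \in s & forall y, y \in s -> (y == x) || lt y x.
Proof.
elim: s => [//|a s IH] _.
case: s IH => [|b s] IH.
  by exists a; rewrite ?inE // => y; rewrite inE => ->.
have [x Hx Hmax] := IH isT.
case: (eqVneq a x) => [->|Hax].
  by exists x; rewrite ?inE ?eqxx // => y; rewrite inE => /orP[->|/Hmax].
case/orP: (ltTot Hax) => Hlt.
  exists x; first by rewrite inE Hx orbT.
  by move=> y; rewrite inE => /orP[/eqP->|/Hmax]; rewrite ?Hlt ?orbT.
exists a; first by rewrite inE eqxx.
move=> y; rewrite inE => /orP[->//|/Hmax /orP[/eqP->|Hy]]; first by rewrite Hlt orbT.
by rewrite (ltT Hy Hlt) orbT.
Qed.

Definition lin (R : seq P) (c : nat -> K) : P := \sum_(i < size R) c i *: R`_i.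

Lemma in_spanE (R : seq P) p : in_span R p <-> exists c, p = lin R c.
Proof.
split.
  case=> c ->; exists (fun i => if insub i is Some j then c j else 0).
  by apply: eq_bigr => i _; rewrite valK.
by case=> c ->; exists (fun i => c i).
Qed.

Lemma linE (R : seq P) c : lin R c = \sum_(0 <= i < size R) c i *: R`_i.
Proof. by rewrite /lin big_mkord. Qed.

Lemma lin_cat (R1 R2 : seq P) c :
  lin (R1 ++ R2) c = lin R1 c + lin R2 (fun i => c (size R1 + i)%N).
Proof.
rewrite !linE size_cat.
rewrite (@big_cat_nat _ _ _ (size R1)) //=; last by rewrite leq_addr.
congr (_ + _).
  by apply: eq_big_nat => i /andP[_ Hi]; rewrite nth_cat Hi.
rewrite -{1}[size R1]add0n big_addn addnC addnK; apply: eq_big_nat => i _.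
by rewrite nth_cat ltnNge leq_addl /= addnK addnC.
Qed.

Lemma lin0 (R : seq P) : lin R (fun=> 0) = 0.
Proof. by rewrite /lin big1 // => i _; rewrite scale0r. Qed.

Lemma linD (R : seq P) c1 c2 : lin R c1 + lin R c2 = lin R (fun i => c1 i + c2 i).
Proof. by rewrite /lin -big_split; apply: eq_bigr => i _; rewrite scalerDl. Qed.

Lemma linZ (R : seq P) a c : a *: lin R c = lin R (fun i => a * c i).
Proof. by rewrite /lin scaler_sumr; apply: eq_bigr => i _; rewrite scalerA. Qed.

Lemma linN (R : seq P) c : - lin R c = lin R (fun i => - c i).
Proof. by rewrite /lin -sumrN; apply: eq_bigr => i _; rewrite scaleNr. Qed.

Definition monlin (B : seq 'X_{1..N}) (c : nat -> K) : P :=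
  \sum_(i < size B) c i *: 'X_[nth 0%MM B i].

Lemma lin_map (B : seq 'X_{1..N}) (f : P) c :
  lin [seq 'X_[b] * f | b <- B] c = monlin B c * f.
Proof.
rewrite /lin /monlin size_map mulr_suml; apply: eq_bigr => i _.
by rewrite (nth_map 0%MM) // -scalerAl.
Qed.

Lemma msupp_lin (R : seq P) c m : m \in msupp (lin R c) ->
  exists2 i, (i < size R)%N & m \in msupp R`_i.
Proof.
move/msupp_sum_le/flattenP => [s /mapP [i _ ->] /msuppZ_le Hm].
by exists i.
Qed.

Lemma monlin_coef (B : seq 'X_{1..N}) c j : uniq B -> (j < size B)%N ->
  (monlin B c)@_(nth 0%MM B j) = c j.
Proof.
move=> HB Hj; rewrite /monlin raddf_sum /= (bigD1 (Ordinal Hj)) //= big1.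
  by rewrite mcoeffZ mcoeffX eqxx mulr1 addr0.
move=> i /eqP Hij; rewrite mcoeffZ mcoeffX nth_uniq //.
by rewrite (_ : (i == j :> nat) = false) ?mulr0 //; apply/eqP => E; apply: Hij; apply: val_inj.
Qed.

Lemma msupp_monlin (B : seq 'X_{1..N}) c m : m \in msupp (monlin B c) -> m \in B.
Proof.
move/msupp_sum_le/flattenP => [s /mapP [i _ ->] /msuppZ_le].
by rewrite msuppX inE => /eqP ->; apply: mem_nth.
Qed.

Lemma monlinE (B : seq 'X_{1..N}) (w : P) : uniq B -> {subset msupp w <= B} ->
  w = monlin B (fun i => w@_(nth 0%MM B i)).
Proof.
move=> HB Hsub; apply/mpolyP => m.
case: (boolP (m \in B)) => HmB.
  by rewrite -(nth_index 0%MM HmB) monlin_coef ?index_mem.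
rewrite memN_msupp_eq0; last by apply: contra HmB; apply: Hsub.
by rewrite memN_msupp_eq0 //; apply: contra HmB; apply: msupp_monlin.
Qed.


Lemma decideP (Q : Prop) : reflect Q (decide Q).
Proof. by rewrite /decide; case: excluded_middle_informative => H; constructor. Qed.

Lemma count_lt (T : eqType) (a1 a2 : pred T) (U : seq T) x0 :
  subpred a1 a2 -> x0 \in U -> a2 x0 -> ~~ a1 x0 -> (count a1 U < count a2 U)%N.
Proof.
move=> Hs; elim: U => [//|y U IH] /=; rewrite inE => /orP[/eqP<-|Hx] H2 H1.
  by rewrite (negbTE H1) H2 add0n add1n ltnS sub_count.
rewrite -addnS; apply: leq_add; last exact: IH.
by case Ha: (a1 y); rewrite // Hs.
Qed.

Lemma LMset_U (R : seq P) m : LMset lt R m -> m \in flatten [seq msupp x | x <- R].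
Proof.
case=> p [/in_spanE [c ->] _ [Hm _]].
have [i Hi Hmi] := msupp_lin Hm.
by apply/flattenP; exists (msupp R`_i) => //; apply: map_f; apply: mem_nth.
Qed.

Lemma reduce (R : seq P) (q : P) :
  exists c, forall m, m \in msupp (q - lin R c) -> ~ LMset lt R m.
Proof.
pose U := flatten [seq msupp x | x <- R].
pose bad (w : P) m := (m \in msupp w) && decide (LMset lt R m).
pose mu (w : P) := count (fun x => has (fun m => bad w m && ((x == m) || lt x m)) (msupp w)) U.
suff H : forall k (w : P), (mu w < k)%N ->
  exists c, forall m, m \in msupp (w - lin R c) -> ~ LMset lt R m.
  exact: (H (mu q).+1).
elim=> [//|k IH] w Hk.
case: (boolP (has (bad w) (msupp w))) => Hbad; last first.
  exists (fun=> 0) => m; rewrite lin0 subr0 => Hm HL.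
  by move/hasPn: Hbad => /(_ m Hm); rewrite /bad Hm; move/decideP: HL => ->.
have [beta Hb Hmax] : exists2 x, x \in filter (bad w) (msupp w) &
    forall y, y \in filter (bad w) (msupp w) -> (y == x) || lt y x.
  by apply: max_exists; rewrite -size_eq0 size_filter -lt0n -has_count.
move: Hb; rewrite mem_filter => /andP[/andP[Hbw /decideP HLb] _].
have HbU : beta \in U by apply: LMset_U.
have [p [/in_spanE [cp Ep] Hp0 [Hbp Hlm]]] := HLb.
pose a := w@_beta / p@_beta.
pose w' := w - a *: p.
have Hpb : p@_beta != 0 by rewrite -mcoeff_msupp.
have Hw'b : w'@_beta = 0.
  by rewrite /w' mcoeffB mcoeffZ /a mulfVK // subrr.
have Hbad' : forall m, bad w' m -> lt m beta.
  move=> m /andP[Hm HL].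
  have Hmb : m != beta by apply: contraTneq Hm => ->; rewrite mcoeff_msupp Hw'b eqxx.
  move/msuppB_le: Hm; rewrite mem_cat => /orP[Hm|/msuppZ_le Hm]; last exact: Hlm.
  have : m \in filter (bad w) (msupp w) by rewrite mem_filter /bad Hm HL.
  by move/Hmax; rewrite (negbTE Hmb).
have Hmu : (mu w' < mu w)%N.
  apply: (count_lt (x0 := beta)) => //.
  - move=> x /hasP [m Hm /andP[Hbm Hxm]]; apply/hasP; exists beta => //.
    rewrite /bad Hbw /=; apply/andP; split; first exact/decideP.
    have Hmb := Hbad' m Hbm.
    case/orP: Hxm => [/eqP->|Hxm]; first by rewrite Hmb orbT.
    by rewrite (ltT Hxm Hmb) orbT.
  - apply/hasP; exists beta => //; rewrite /bad Hbw eqxx /= andbT; exact/decideP.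
  - apply/hasP => -[m Hm /andP[Hbm Hxm]].
    have Hmb := Hbad' m Hbm.
    case/orP: Hxm => [/eqP Hxm|Hxm]; first by rewrite Hxm ltI in Hmb.
    by have := ltT Hxm Hmb; rewrite ltI.
have [c' Hc'] := IH w' (leq_trans Hmu Hk).
exists (fun i => c' i + a * cp i) => m.
rewrite -linD -linZ -Ep opprD addrA addrAC; exact: Hc'.
Qed.


Local Notation Pair := (P * ('I_r -> nat))%type.
Definition x0 : Pair := (0, fun=> 0%N).
Definition Rows (fs : seq Pair) d := M3H_rev lt (rev fs) d.
Definition dsub (d : 'I_r -> int) (e : 'I_r -> nat) := fun i => d i - (e i)%:Z.

Lemma RowsS fs f e d : Rows (rcons fs (f, e)) d =
  Rows fs d ++ [seq 'X_[b] * f | b <- mons lt (dsub d e)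
                  & ~~ decide (LMset lt (Rows fs (dsub d e)) b)].
Proof. by rewrite /Rows rev_rcons. Qed.

Definition inI (fs : seq Pair) (e : 'I_r -> int) (p : P) : Prop :=
  exists g : nat -> P,
    (forall j, (j < size fs)%N -> mhomog (dsub e (nth x0 fs j).2) (g j)) /\
    p = \sum_(j < size fs) g j * (nth x0 fs j).1.

Definition Hf (fs : seq Pair) := forall j, (j < size fs)%N ->
  mhomog (fun i => ((nth x0 fs j).2 i)%:Z) (nth x0 fs j).1.

Lemma Hf_rcons fs x : Hf (rcons fs x) -> Hf fs.
Proof.
move=> H j Hj; have := H j; rewrite size_rcons nth_rcons Hj; apply.
exact: leqW.
Qed.

Lemma inI_homog fs e p : Hf fs -> inI fs e p -> mhomog e p.
Proof.
move=> Hfs [g [Hg ->]]; apply: mhomog_sum => j _.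
apply: (mhomog_ext _ (mhomogM (Hg j (ltn_ord j)) (Hfs j (ltn_ord j)))).
by move=> i; rewrite /dsub subrK.
Qed.

Lemma inI0 fs e : inI fs e 0.
Proof.
by exists (fun=> 0); split=> [j _|]; [exact: mhomog0| rewrite big1 // => j _; rewrite mul0r].
Qed.

Lemma inID fs e p q : inI fs e p -> inI fs e q -> inI fs e (p + q).
Proof.
move=> [g [Hg ->]] [h [Hh ->]]; exists (fun j => g j + h j); split.
  by move=> j Hj; apply: mhomogD; [apply: Hg|apply: Hh].
by rewrite -big_split; apply: eq_bigr => j _; rewrite mulrDl.
Qed.

Lemma inIZ fs e a p : inI fs e p -> inI fs e (a *: p).
Proof.
move=> [g [Hg ->]]; exists (fun j => a *: g j); split.
  by move=> j Hj; apply: mhomogZ; apply: Hg.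
by rewrite scaler_sumr; apply: eq_bigr => j _; rewrite scalerAl.
Qed.

Lemma inI_lin fs e (R : seq P) c : (forall p, p \in R -> inI fs e p) -> inI fs e (lin R c).
Proof.
move=> H; rewrite /lin; apply: (big_ind (inI fs e)); [exact: inI0|exact: inID|].
by move=> i _; apply: inIZ; apply: H; apply: mem_nth.
Qed.

Lemma inI_rcons fs x e p : inI fs e p -> inI (rcons fs x) e p.
Proof.
move=> [g [Hg ->]]; exists (fun j => if (j < size fs)%N then g j else 0); split.
  move=> j _; rewrite nth_rcons; case: ifP => Hj; [exact: Hg|exact: mhomog0].
rewrite size_rcons big_ord_recr /= ltnn mul0r addr0.
by apply: eq_bigr => j _; rewrite nth_rcons ltn_ord.
Qed.

Lemma inI_last fs x e q : mhomog (dsub e x.2) q -> inI (rcons fs x) e (q * x.1).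
Proof.
move=> Hq; exists (fun j => if j == size fs then q else 0); split.
  move=> j _; rewrite nth_rcons; case: eqP => [->|_]; last exact: mhomog0.
  by rewrite ltnn ?eqxx.
rewrite size_rcons big_ord_recr /= eqxx.
rewrite nth_rcons ltnn eqxx big1 ?add0r // => j _.
by rewrite ltn_eqF // mul0r.
Qed.

Lemma inI_mulr fs e1 e2 e p f : inI fs e1 p -> mhomog e2 f ->
  (forall i, e i = e1 i + e2 i) -> inI fs e (p * f).
Proof.
move=> [g [Hg ->]] Hf2 He; exists (fun j => g j * f); split.
  move=> j Hj; apply: (mhomog_ext _ (mhomogM (Hg j Hj) Hf2)).
  by move=> i; rewrite /dsub He addrAC.
by rewrite mulr_suml; apply: eq_bigr => j _; rewrite mulrAC.
Qed.

Lemma rows_inI fs d p : p \in Rows fs d -> inI fs d p.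
Proof.
elim/last_ind: fs d p => [|fs [f e] IH] d p; first by [].
rewrite RowsS mem_cat => /orP[/IH Hp|]; first exact: inI_rcons.
move=> /mapP [b]; rewrite mem_filter => /andP[_ Hb] ->.
by apply: inI_last; apply: mhomogX; apply: mons_homog.
Qed.

Lemma lin_eq (R : seq P) c c' : (forall i, (i < size R)%N -> c i = c' i) -> lin R c = lin R c'.
Proof. by move=> H; apply: eq_bigr => i _; rewrite H. Qed.

Lemma inI_span fs d p : Hf fs -> inI fs d p -> in_span (Rows fs d) p.
Proof.
elim/last_ind: fs d p => [|fs [f e] IH] d p Hfs.
  by case=> g [_ ->]; apply/in_spanE; exists (fun=> 0); rewrite lin0 big_ord0.
have Hfs' := Hf_rcons Hfs.
have Hff : mhomog (fun i => (e i)%:Z) f.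
  by have := Hfs (size fs); rewrite size_rcons nth_rcons ltnn eqxx; apply.
case=> g [Hg ->].
rewrite size_rcons big_ord_recr /=.
rewrite nth_rcons ltnn eqxx /=.
have [c1 E1] : exists c1, \sum_(j < size fs) g j * (nth x0 (rcons fs (f, e)) j).1 = lin (Rows fs d) c1.
  apply/in_spanE; apply: IH => //.
  exists g; split.
    by move=> j Hj; have := Hg j; rewrite nth_rcons Hj size_rcons; apply; apply: leqW.
  by apply: eq_bigr => j _; rewrite nth_rcons ltn_ord.
set q := g (size fs).
have Hq : mhomog (dsub d e) q.
  by have := Hg (size fs); rewrite nth_rcons ltnn eqxx size_rcons; apply.
set R' := Rows fs (dsub d e).
have [c Hc] := reduce R' q.
set v := lin R' c; set w := q - v.
have Hv : inI fs (dsub d e) v by apply: inI_lin => x; apply: rows_inI.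
have [c2 E2] : exists c2, v * f = lin (Rows fs d) c2.
  apply/in_spanE; apply: IH => //; apply: (inI_mulr Hv Hff).
  by move=> i; rewrite /dsub subrK.
set B := [seq b <- mons lt (dsub d e) | ~~ decide (LMset lt R' b)].
have HB : uniq B by rewrite filter_uniq // mons_uniq.
have Hw : {subset msupp w <= B}.
  move=> m Hm; rewrite mem_filter; apply/andP; split.
    by apply/negP => /decideP; apply: Hc.
  apply: (homog_mons _ Hm); apply: mhomogB => //; exact: inI_homog Hv.
have Ew := monlinE HB Hw.
apply/in_spanE.
exists (fun i => if (i < size (Rows fs d))%N then c1 i + c2 i
               else w@_(nth 0%MM B (i - size (Rows fs d)))).
rewrite RowsS lin_cat lin_map -/R' -/B.
rewrite (lin_eq (c' := fun i => c1 i + c2 i)); last by move=> i ->.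
rewrite -linD -E1 -E2.
have -> : q = v + w by rewrite /w addrC subrK.
rewrite mulrDl addrA; congr (_ + _ * f).
by rewrite {1}Ew; apply: eq_bigr => i _; rewrite ltnNge leq_addr /= addnC addnK.
Qed.


Definition indep (R : seq P) := forall c, lin R c = 0 -> forall i, (i < size R)%N -> c i = 0.

Lemma indep_step fs f e d : Hf (rcons fs (f, e)) -> indep (Rows fs d) ->
  H1_vanishes (rcons fs (f, e)) d -> indep (Rows (rcons fs (f, e)) d).
Proof.
move=> Hfs Hind H1 c.
have Hfs' := Hf_rcons Hfs.
set R0 := Rows fs d.
set R' := Rows fs (dsub d e).
set B := [seq b <- mons lt (dsub d e) | ~~ decide (LMset lt R' b)].
have HB : uniq B by rewrite filter_uniq // mons_uniq.
rewrite RowsS lin_cat lin_map -/R' -/B -/R0 => Hc.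
set g := monlin B (fun i => c (size R0 + i)%N).
have Hg_hom : mhomog (dsub d e) g.
  apply: mhomog_sum => i _; apply: mhomogZ; apply: mhomogX; apply: mons_homog.
  by have := mem_nth 0%MM (ltn_ord i); rewrite mem_filter => /andP[_ ->].
move/eqP: Hc; rewrite addrC addr_eq0 => /eqP E.
have [G [HG EG]] : inI fs d (g * f).
  by rewrite E linN; apply: inI_lin => x; apply: rows_inI.
pose GG (j : nat) := if (j < size fs)%N then G j else - g.
have Hjm : (size fs < size (rcons fs (f, e)))%N by rewrite size_rcons.
pose jm := Ordinal Hjm.
have Hhom : forall j : 'I_(size (rcons fs (f, e))),
    mhomog (fun i => d i - ((nth x0 (rcons fs (f, e)) j).2 i)%:Z) (GG j).
  move=> j; rewrite /GG; case: ifP => Hj.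
    by have := HG j Hj; rewrite nth_rcons Hj.
  have Hjs : nat_of_ord j = size fs.
    by apply/eqP; rewrite eqn_leq -ltnS -(size_rcons fs (f, e)) ltn_ord leqNgt Hj.
  rewrite nth_rcons Hj Hjs eqxx /=; exact: mhomogN.
have Hsum : \sum_(j < size (rcons fs (f, e))) GG j * (nth x0 (rcons fs (f, e)) j).1 = 0.
  rewrite size_rcons big_ord_recr /= /GG ltnn nth_rcons ltnn eqxx /= mulNr.
  rewrite (eq_bigr (fun j : 'I_(size fs) => G j * (nth x0 fs j).1)); last first.
    by move=> j _; rewrite ltn_ord nth_rcons ltn_ord.
  by rewrite -EG subrr.
have [h [Hh1 Hh2]] := H1 (fun j => GG j) Hhom Hsum.
pose H (i : nat) := if insub i is Some i' then h i' jm else 0.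
have Eg : - g = \sum_(i < size fs) H i * (nth x0 fs i).1.
  have := Hh2 jm; rewrite /GG /= ltnn => ->.
  rewrite [X in _ - X]big1 ?subr0; last first.
    by move=> i Hi; exfalso; have := ltn_ord i; rewrite [X in (_ < X)%N]size_rcons ltnS; move: Hi => /= Hi Hle; have := leq_ltn_trans Hle Hi; rewrite ltnn.
  rewrite (eq_bigr (fun i : 'I_(size (rcons fs (f, e))) => H i * (nth x0 (rcons fs (f, e)) i).1)); last first.
    by move=> i _; rewrite /H valK.
  rewrite big_mkcond size_rcons big_ord_recr /= ltnn addr0.
  by apply: eq_bigr => i _; rewrite ltn_ord nth_rcons ltn_ord.
have HgI : inI fs (dsub d e) g.
  exists (fun i => - H i); split.
    move=> i Hi; apply: mhomogN.
    have Hi' : (i < size (rcons fs (f, e)))%N by rewrite size_rcons ltnW.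
    rewrite /H; case: insubP => [i' _ Ei'|]; last by rewrite Hi'.
    have := Hh1 i' jm; rewrite /= Ei' => /(_ Hi); rewrite !nth_rcons Hi ltnn eqxx /=.
    by apply: mhomog_ext => l; rewrite /dsub addrAC.
  by rewrite -[g]opprK Eg -sumrN; apply: eq_bigr => i _; rewrite mulNr.
have Hgs := inI_span Hfs' HgI.
have Hg0 : g = 0.
  apply/eqP; apply/negPn/negP => Hgn.
  have [beta Hb Hmax] : exists2 x, x \in msupp g & forall y, y \in msupp g -> (y == x) || lt y x.
    by apply: max_exists; rewrite msupp_eq0.
  have HL : LMset lt R' beta.
    exists g; split => //; split => // m' Hm' Hne.
    by move: (Hmax m' Hm'); rewrite (negbTE Hne).
  have := msupp_monlin Hb; rewrite mem_filter => /andP[/negP Hd _].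
  by apply: Hd; apply/decideP.
have HR0 : lin R0 c = 0.
  by apply/eqP; rewrite -oppr_eq0 -E -/g Hg0 mul0r.
move=> i; rewrite size_cat size_map => Hi.
case: (ltnP i (size R0)) => Hi0; first exact: Hind.
move: Hi; rewrite -(subnKC Hi0) ltn_add2l => Hi.
have := monlin_coef (fun i => c (size R0 + i)%N) HB Hi.
by rewrite -/g Hg0 mcoeff0.
Qed.


Lemma Hf_take fs s : Hf fs -> Hf (take s fs).
Proof.
move=> H j; rewrite size_take_min leq_min => /andP[Hjs Hjf].
by rewrite nth_take //; apply: H.
Qed.

Lemma indep_take fs0 d : Hf fs0 ->
  (forall s, (s <= size fs0)%N -> H1_vanishes (take s fs0) d) -> indep (Rows fs0 d).
Proof.
move=> Hfs H1.
suff : forall s, (s <= size fs0)%N -> indep (Rows (take s fs0) d).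
  by move/(_ (size fs0) (leqnn _)); rewrite take_size.
elim=> [|s IH] Hs; first by rewrite take0 => c _ i.
rewrite (take_nth x0 Hs).
case E: (nth x0 fs0 s) => [f e].
have Hft := Hf_take (s := s.+1) Hfs.
have := H1 s.+1 Hs; rewrite (take_nth x0 Hs) E => H1'.
apply: indep_step => //; last exact: IH (ltnW Hs).
by move: Hft; rewrite (take_nth x0 Hs) E.
Qed.

Lemma full_rank_rows fs d : Hf fs -> indep (Rows fs d) ->
  full_rank (macaulay (Rows fs d) (mons lt d)).
Proof.
move=> Hfs Hind; set R := Rows fs d; set A := macaulay R (mons lt d).
have Hfree : row_free A.
  apply: inj_row_free => v Hv.
  pose c (i : nat) := if insub i is Some i' then v 0 i' else 0.
  have Hp0 : lin R c = 0.
    apply/mpolyP => m; rewrite mcoeff0.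
    case: (boolP (m \in msupp (lin R c))) => Hm; last exact: memN_msupp_eq0.
    have Hhom : mhomog d (lin R c).
      by apply: (inI_homog Hfs); apply: inI_lin => x; apply: rows_inI.
    have HmM := homog_mons Hhom Hm.
    have Hj : (index m (mons lt d) < size (mons lt d))%N by rewrite index_mem.
    have := congr1 (fun M : 'M[K]_(1, size (mons lt d)) => M 0 (Ordinal Hj)) Hv; rewrite !mxE /= => <-.
    rewrite /lin raddf_sum; apply: eq_bigr => i _.
    by rewrite /= mcoeffZ /A /macaulay mxE /= nth_index // /c valK.
  apply/rowP => i; rewrite mxE.
  by have := Hind c Hp0 i (ltn_ord i); rewrite /c valK.
rewrite /full_rank; move/eqP: (Hfree) => ->.
by apply/eqP/esym/minn_idPl; rewrite -(eqP Hfree) rank_leq_col.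
Qed.

End Pf.

Theorem mainTheorem20 (K : fieldType) (Kchar0 : [pchar K] =i pred0)
  (r : nat) (n : 'I_r -> nat) (lt : rel 'X_{1..nvars n})
  (lt_monomial : monomial_order lt)
  (k : nat) (f : 'I_k -> {mpoly K[nvars n]}) (degf : 'I_k -> 'I_r -> nat)
  (f_mhomog : forall j, mhomog (fun i => (degf j i)%:Z) (f j))
  (d : 'I_r -> int) :
  let fs := [seq (f j, degf j) | j <- enum 'I_k] in
  (forall s, (s <= k)%N -> H1_vanishes (take s fs) d) ->
  full_rank (M3H lt fs d).
Proof.
move=> fs H1.
have Hsz : size fs = k by rewrite size_map size_enum_ord.
have Hfs : Hf fs.
  move=> j Hj; have Hjk : (j < k)%N by rewrite -Hsz.
  by rewrite /fs (nth_map (Ordinal Hjk)) ?size_enum_ord //=.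
have Hind : indep (Rows lt fs d).
  apply: (indep_take lt_monomial Hfs) => s; rewrite Hsz; exact: H1.
exact: (full_rank_rows Hfs Hind).
Qed.
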